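(* Let $p(n)=\sum_{k=0}^d a_k n^k$ be a polynomial with real coefficients $a_0,\ldots,a_d$, and let $p_k(n)=a_k n^k$ denote its terms. Then the sequence $\{p(n)\bmod 1\}_{n\ge0}$ in $\mathbb{T}$ has the repetition property if and only if the sequences $\{p_k(n)\bmod 1\}_{n\ge0}$, $0\le k\le d$, have the joint repetition property.
   Context: $\mathbb{T}=\mathbb{R}/\mathbb{Z}$ with metric $\mathrm{dist}(x,y)=\langle x-y\rangle$, where $\langle\tau\rangle=\min\{|\hat\tau-p|:p\in\mathbb{Z}\}$ for any representative $\hat\tau\in\mathbb{R}$ of $\tau$. $\mathbb{Z}_+=\{1,2,\ldots\}$. A sequence $\{\omega_n\}_{n\ge0}$ in a metric space $\Omega$ has the repetition property if for every $\varepsilon>0$ and $r \in \mathbb{Z}_+$ there exists $q \in \mathbb{Z}_+$ such that $\mathrm{dist}(\omega_n,\omega_{n+q}) < \varepsilon$ for $n = 0,1,\ldots, rq$. A family of sequences has the joint repetition property if each of them has the repetition property and, for each finite subfamily and each $\varepsilon>0$, $r\in\mathbb{Z}_+$, a single $q\in\mathbb{Z}_+$ can be chosen that works simultaneously for all sequences in the subfamily. *)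

(* Defs.v *)
From Stdlib Require Import Reals Lra Lia List.
Open Scope R_scope.

(* <t> = distance from t to the nearest integer = min_{p in Z} |t - p|.
   With f = t - floor t in [0,1), this is min(f, 1-f). *)
Definition frac (t : R) : R := t - IZR (Int_part t).
Definition tnorm (t : R) : R := Rmin (frac t) (1 - frac t).

(* Metric on T = R/Z, on representatives. *)
Definition tdist (x y : R) : R := tnorm (x - y).

(* A sequence in T, given by real representatives w : nat -> R
   (i.e. the sequence w n mod 1). *)
Definition repetition (w : nat -> R) : Prop :=
  forall (eps : R) (r : nat), 0 < eps -> (1 <= r)%nat ->
    exists q : nat, (1 <= q)%nat /\
      forall n : nat, (n <= r * q)%nat -> tdist (w n) (w (n + q)%nat) < eps.

Definition joint_repetition {I : Type} (F : I -> nat -> R) : Prop :=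
  (forall i, repetition (F i)) /\
  forall (S : list I) (eps : R) (r : nat), 0 < eps -> (1 <= r)%nat ->
    exists q : nat, (1 <= q)%nat /\
      forall i, In i S ->
        forall n : nat, (n <= r * q)%nat -> tdist (F i n) (F i (n + q)%nat) < eps.

Definition poly_term (a : nat -> R) (k n : nat) : R := a k * INR n ^ k.
Definition poly_eval (a : nat -> R) (d n : nat) : R := sum_f_R0 (fun k => poly_term a k n) d.

(* Main.v *)
Require Import Defs.
From Stdlib Require Import Reals Lra Lia List ZArith FunctionalExtensionality.
Open Scope R_scope.

Lemma frac_bounds t : 0 <= frac t < 1.
Proof. unfold frac. destruct (base_Int_part t). lra. Qed.

Lemma tnorm_attained x : exists z, tnorm x = Rabs (x - IZR z).
Proof.
  unfold tnorm. destruct (frac_bounds x) as [H1 H2].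
  unfold Rmin. destruct (Rle_dec (frac x) (1 - frac x)).
  - exists (Int_part x). unfold frac in *. rewrite Rabs_right; lra.
  - exists (Int_part x + 1)%Z. rewrite plus_IZR. unfold frac in *.
    rewrite Rabs_left; lra.
Qed.

Lemma tnorm_le x z : tnorm x <= Rabs (x - IZR z).
Proof.
  unfold tnorm. destruct (frac_bounds x) as [H1 H2].
  assert (E : x - IZR z = frac x - IZR (z - Int_part x)).
  { unfold frac. rewrite minus_IZR. ring. }
  rewrite E. destruct (Z_le_gt_dec (z - Int_part x) 0) as [Hk|Hk].
  - apply IZR_le in Hk. apply Rle_trans with (frac x). apply Rmin_l.
    rewrite Rabs_right; lra.
  - assert (Hk' : (1 <= z - Int_part x)%Z) by lia. apply IZR_le in Hk'.
    apply Rle_trans with (1 - frac x). apply Rmin_r.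
    rewrite Rabs_left1; lra.
Qed.

Lemma tnorm_nonneg x : 0 <= tnorm x.
Proof. destruct (tnorm_attained x) as [z H]. rewrite H. apply Rabs_pos. Qed.

Lemma tnorm_shift x z : tnorm (x + IZR z) = tnorm x.
Proof.
  apply Rle_antisym.
  - destruct (tnorm_attained x) as [z0 H]. rewrite H.
    replace (x - IZR z0) with (x + IZR z - IZR (z0 + z)) by (rewrite plus_IZR; ring).
    apply tnorm_le.
  - destruct (tnorm_attained (x + IZR z)) as [z0 H]. rewrite H.
    replace (x + IZR z - IZR z0) with (x - IZR (z0 - z)) by (rewrite minus_IZR; ring).
    apply tnorm_le.
Qed.

Lemma tnorm_opp x : tnorm (- x) = tnorm x.
Proof.
  apply Rle_antisym.
  - destruct (tnorm_attained x) as [z0 H]. rewrite H.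
    replace (x - IZR z0) with (- (- x - IZR (- z0))) by (rewrite opp_IZR; ring).
    rewrite Rabs_Ropp. apply tnorm_le.
  - destruct (tnorm_attained (-x)) as [z0 H]. rewrite H.
    replace (- x - IZR z0) with (- (x - IZR (- z0))) by (rewrite opp_IZR; ring).
    rewrite Rabs_Ropp. apply tnorm_le.
Qed.

Lemma tnorm_add x y : tnorm (x + y) <= tnorm x + tnorm y.
Proof.
  destruct (tnorm_attained x) as [zx Hx]. destruct (tnorm_attained y) as [zy Hy].
  rewrite Hx, Hy. eapply Rle_trans. apply (tnorm_le _ (zx + zy)).
  rewrite plus_IZR. replace (x + y - (IZR zx + IZR zy)) with ((x - IZR zx) + (y - IZR zy)) by ring.
  apply Rabs_triang.
Qed.

Lemma tnorm_sub x y : tnorm (x - y) <= tnorm x + tnorm y.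
Proof. unfold Rminus. rewrite <- (tnorm_opp y). apply tnorm_add. Qed.

Lemma tnorm_abs x : tnorm x <= Rabs x.
Proof. replace x with (x - IZR 0) at 2 by (simpl; ring). apply tnorm_le. Qed.

Lemma tnorm_IZR z : tnorm (IZR z) = 0.
Proof.
  apply Rle_antisym. replace (IZR z) with (0 + IZR z) by ring. rewrite tnorm_shift.
  eapply Rle_trans. apply tnorm_abs. rewrite Rabs_R0. lra. apply tnorm_nonneg.
Qed.

Definition isZ (x : R) := exists z, x = IZR z.

Lemma isZ_add x y : isZ x -> isZ y -> isZ (x + y).
Proof. intros [a ->] [b ->]. exists (a+b)%Z. now rewrite plus_IZR. Qed.
Lemma isZ_sub x y : isZ x -> isZ y -> isZ (x - y).
Proof. intros [a ->] [b ->]. exists (a-b)%Z. now rewrite minus_IZR. Qed.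
Lemma isZ_mul x y : isZ x -> isZ y -> isZ (x * y).
Proof. intros [a ->] [b ->]. exists (a*b)%Z. now rewrite mult_IZR. Qed.
Lemma isZ_INR n : isZ (INR n).
Proof. exists (Z.of_nat n). apply INR_IZR_INZ. Qed.

Lemma tnorm_isZ x y : isZ y -> tnorm (x + y) = tnorm x.
Proof. intros [z ->]. apply tnorm_shift. Qed.

Lemma tnorm_small x eps : Rabs x <= 1 - eps -> tnorm x < eps -> eps <= 1/2 -> Rabs x < eps.
Proof.
  intros H1 H2 H3. destruct (tnorm_attained x) as [z Hz]. rewrite Hz in H2.
  assert (Hz0 : z = 0%Z).
  { assert (-1 < IZR z < 1).
    { split; apply Rabs_def2 in H1 || idtac;
      revert H1 H2; unfold Rabs; repeat destruct Rcase_abs; intros; lra. }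
    destruct H as [Ha Hb]. apply lt_IZR in Ha. apply lt_IZR in Hb. lia. }
  subst z. simpl in H2. now rewrite Rminus_0_r in H2.
Qed.

Definition D (f : nat -> R) : nat -> R := fun n => f (S n) - f n.
Fixpoint Dn (m : nat) (f : nat -> R) : nat -> R :=
  match m with O => f | S m' => Dn m' (D f) end.

Lemma Dn_ext m : forall f g, (forall n, f n = g n) -> forall n, Dn m f n = Dn m g n.
Proof.
  induction m; intros f g H n; simpl. apply H.
  apply IHm. intro k. unfold D. rewrite !H. reflexivity.
Qed.

Lemma Dn_lin m : forall f g al be n,
  Dn m (fun k => al * f k + be * g k) n = al * Dn m f n + be * Dn m g n.
Proof.
  induction m; intros f g al be n; simpl. reflexivity.
  rewrite <- IHm. apply Dn_ext. intro k. unfold D. ring.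
Qed.

Lemma Dn_sub m f g n : Dn m (fun k => f k - g k) n = Dn m f n - Dn m g n.
Proof.
  rewrite (Dn_ext m _ (fun k => 1 * f k + (-1) * g k)) by (intro; ring).
  rewrite Dn_lin. ring.
Qed.

Lemma Dn_scal m f c n : Dn m (fun k => c * f k) n = c * Dn m f n.
Proof.
  rewrite (Dn_ext m _ (fun k => c * f k + 0 * f k)) by (intro; ring).
  rewrite Dn_lin. ring.
Qed.

Lemma Dn_sum m (F : nat -> nat -> R) K n :
  Dn m (fun k => sum_f_R0 (fun i => F i k) K) n = sum_f_R0 (fun i => Dn m (F i) n) K.
Proof.
  induction K; simpl. reflexivity.
  rewrite (Dn_ext m _ (fun k => 1 * sum_f_R0 (fun i => F i k) K + 1 * F (S K) k))
    by (intro; simpl; ring).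
  rewrite Dn_lin, IHK. ring.
Qed.

Lemma Dn_shift m : forall f q n, Dn m (fun k => f (k + q)%nat) n = Dn m f (n + q)%nat.
Proof.
  induction m; intros f q n; simpl. reflexivity.
  rewrite <- IHm. apply Dn_ext. intro k. unfold D. reflexivity.
Qed.

Lemma Dn_succ m : forall f n, Dn (S m) f n = Dn m f (S n) - Dn m f n.
Proof.
  induction m; intros f n. reflexivity.
  change (Dn (S (S m)) f n) with (Dn (S m) (D f) n). rewrite IHm. reflexivity.
Qed.

Lemma Dn_zero_up m f : (forall n, Dn m f n = 0) -> forall t n, Dn (t + m) f n = 0.
Proof.
  intros H t. induction t; intro n. apply H.
  simpl plus. rewrite Dn_succ, !IHt. ring.
Qed.

Lemma Dn_const_next m f c : (forall n, Dn m f n = c) -> forall n, Dn (S m) f n = 0.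
Proof. intros H n. rewrite Dn_succ, !H. ring. Qed.

Fixpoint psum (g : nat -> R) (n : nat) : R :=
  match n with O => 0 | S n' => psum g n' + g n' end.

Lemma telescope u n s : u (n + s)%nat - u n = psum (fun i => D u (n + i)%nat) s.
Proof.
  induction s; simpl. rewrite Nat.add_0_r. ring.
  rewrite <- IHs. unfold D. rewrite Nat.add_succ_r. ring.
Qed.

Lemma psum_const c s : psum (fun _ => c) s = INR s * c.
Proof. induction s; simpl psum. simpl; ring. rewrite IHs, S_INR. ring. Qed.

Lemma psum_ext g h s : (forall i, g i = h i) -> psum g s = psum h s.
Proof. intro H. induction s; simpl; try rewrite IHs, H; reflexivity. Qed.

Lemma Dn_slope m f c q : (forall n, Dn (S m) f n = c) -> Dn m f q - Dn m f 0 = INR q * c.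
Proof.
  intro H. replace q with (0 + q)%nat at 1 by lia. rewrite telescope.
  rewrite (psum_ext _ (fun _ => c)). apply psum_const.
  intro i. unfold D. rewrite <- Dn_succ. apply H.
Qed.

Lemma Dn_isZ m : forall f, (forall n, isZ (f n)) -> forall n, isZ (Dn m f n).
Proof.
  induction m; intros f H n; simpl. apply H.
  apply IHm. intro k. unfold D. apply isZ_sub; apply H.
Qed.

Definition Dsh (s : nat) (f : nat -> R) : nat -> R := fun n => f (n + s)%nat - f n.
Fixpoint Dshn (m s : nat) (f : nat -> R) : nat -> R :=
  match m with O => f | S m' => Dshn m' s (Dsh s f) end.

Lemma Dshn_bound m : forall s f L eps, (forall n, (n < L)%nat -> Rabs (f n) <= eps) ->
  forall n, (n + m * s < L)%nat -> Rabs (Dshn m s f n) <= 2 ^ m * eps.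
Proof.
  induction m; intros s f L eps H n Hn; simpl.
  - rewrite Rmult_1_l. apply H. lia.
  - replace (2 * 2 ^ m * eps) with (2 ^ m * (2 * eps)) by ring.
    apply (IHm s (Dsh s f) (L - s)%nat).
    + intros k Hk. unfold Dsh. eapply Rle_trans. apply Rabs_triang.
      rewrite Rabs_Ropp. assert (Rabs (f (k + s)%nat) <= eps) by (apply H; lia).
      assert (Rabs (f k) <= eps) by (apply H; lia). lra.
    + simpl in Hn. lia.
Qed.

Lemma Dn_Dsh m : forall s f n, Dn m (Dsh s f) n = Dn m f (n + s)%nat - Dn m f n.
Proof.
  induction m; intros s f n; simpl. reflexivity.
  rewrite (Dn_ext m _ (Dsh s (D f))). apply IHm.
  intro k. unfold D, Dsh. rewrite Nat.add_succ_l. ring.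
Qed.

Lemma Dshn_const m : forall s f c, (forall n, Dn m f n = c) ->
  forall n, Dshn m s f n = INR s ^ m * c.
Proof.
  induction m; intros s f c H n; simpl. rewrite H; ring.
  rewrite (IHm s (Dsh s f) (INR s * c)). ring.
  intro k. rewrite Dn_Dsh. rewrite telescope.
  rewrite (psum_ext _ (fun _ => c)). apply psum_const.
  intro i. unfold D. rewrite <- Dn_succ. apply H.
Qed.

Lemma Dn_constant m f : (forall n, Dn (S m) f n = 0) -> forall n, Dn m f n = Dn m f 0.
Proof.
  intros H n. induction n. reflexivity.
  rewrite <- IHn. specialize (H n). rewrite Dn_succ in H. lra.
Qed.

Lemma build f N eps h' : 0 < eps -> eps <= 1/4 ->
  (forall n, (n < N)%nat -> tnorm (f n) < eps) ->
  (forall n, (S n < N)%nat -> Rabs (h' n) < 2 * eps) ->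
  (forall n, isZ (D f n - h' n)) ->
  exists h, (forall n, (n < N)%nat -> Rabs (h n) < eps) /\
            (forall n, D h n = h' n) /\ (forall n, isZ (f n - h n)).
Proof.
  intros He He4 Hf Hh' HZ.
  destruct (tnorm_attained (f 0%nat)) as [z0 Hz0].
  exists (fun n => f 0%nat - IZR z0 + psum h' n).
  assert (Hint : forall n, isZ (f n - (f 0%nat - IZR z0 + psum h' n))).
  { induction n; simpl psum.
    - exists z0. ring.
    - replace (f (S n) - (f 0%nat - IZR z0 + (psum h' n + h' n)))
        with ((f n - (f 0%nat - IZR z0 + psum h' n)) + (D f n - h' n)) by (unfold D; ring).
      apply isZ_add; auto. }
  split; [|split].
  - induction n; intro Hn.
    + simpl psum. rewrite Rplus_0_r. rewrite <- Hz0. apply Hf. exact Hn.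
    + assert (IH : Rabs (f 0%nat - IZR z0 + psum h' n) < eps) by (apply IHn; lia).
      assert (Hs : Rabs (h' n) < 2 * eps) by (apply Hh'; exact Hn).
      simpl psum. apply tnorm_small; try lra.
      * eapply Rle_trans. replace (f 0%nat - IZR z0 + (psum h' n + h' n))
          with ((f 0%nat - IZR z0 + psum h' n) + h' n) by ring. apply Rabs_triang. lra.
      * destruct (Hint (S n)) as [z Hz]. simpl psum in Hz.
        replace (f 0%nat - IZR z0 + (psum h' n + h' n)) with (f (S n) + IZR (- z))
          by (rewrite opp_IZR; lra).
        rewrite tnorm_shift. apply Hf. exact Hn.
  - intro n. unfold D. simpl psum. ring.
  - exact Hint.
Qed.

Lemma dec m : forall f N eps, 0 < eps -> eps * 2 ^ m <= 1/4 ->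
  (forall n, (n < N)%nat -> tnorm (f n) < eps) ->
  (forall n, Dn (S m) f n = 0) ->
  exists h, (forall n, (n < N)%nat -> Rabs (h n) < eps) /\
            (forall n, Dn (S m) h n = 0) /\ (forall n, isZ (f n - h n)).
Proof.
  induction m; intros f N eps He Hs Hf HD.
  - simpl in Hs. destruct (build f N eps (fun _ => 0)) as [h [H1 [H2 H3]]].
    + lra.
    + lra.
    + exact Hf.
    + intros. rewrite Rabs_R0. lra.
    + intro n. exists 0%Z. specialize (HD n). simpl in HD. simpl. lra.
    + exists h. split; [exact H1|split; [intro n; simpl; apply H2|exact H3]].
  - destruct (IHm (D f) (N - 1)%nat (2 * eps)) as [h' [H1 [H2 H3]]].
    + lra.
    + simpl in Hs. lra.
    + intros n Hn. unfold D. eapply Rle_lt_trans. apply tnorm_sub.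
      assert (tnorm (f (S n)) < eps) by (apply Hf; lia).
      assert (tnorm (f n) < eps) by (apply Hf; lia). lra.
    + intro n. apply HD.
    + destruct (build f N eps h') as [h [G1 [G2 G3]]]; auto.
      * simpl in Hs. assert (1 <= 2 ^ m) by (apply pow_R1_Rle; lra). nra.
      * intros n Hn. apply H1. lia.
      * exists h. split; [exact G1|split; [|exact G3]]. intro n.
        change (Dn (S (S m)) h n) with (Dn (S m) (D h) n).
        rewrite (Dn_ext (S m) _ h' G2). apply H2.
Qed.

Lemma top_extract m g N s eps : 0 < eps -> eps * 2 ^ m <= 1/4 ->
  (forall n, (n < N)%nat -> tnorm (g n) < eps) ->
  (forall n, Dn (S m) g n = 0) -> (m * s < N)%nat ->
  exists z, Rabs (Dn m g 0%nat - IZR z) * INR s ^ m <= 2 ^ m * eps.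
Proof.
  intros He Hs Hg HD Hms.
  destruct (dec m g N eps) as [h [H1 [H2 H3]]]; auto.
  destruct (Dn_isZ m (fun n => g n - h n) H3 0%nat) as [z Hz].
  exists z. rewrite Dn_sub in Hz.
  replace (Dn m g 0%nat - IZR z) with (Dn m h 0%nat) by lra.
  assert (Hc := Dn_constant m h H2).
  assert (E : Rabs (Dn m h 0%nat) * INR s ^ m = Rabs (Dshn m s h 0%nat)).
  { rewrite (Dshn_const m s h _ Hc 0%nat). rewrite Rabs_mult.
    rewrite (Rabs_right (INR s ^ m)) by (apply Rle_ge, pow_le, pos_INR). ring. }
  rewrite E.
  apply (Dshn_bound m s h N eps).
  - intros n Hn. left. apply H1; auto.
  - lia.
Qed.

Definition pw (j : nat) : nat -> R := fun n => INR n ^ j.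

Lemma C_top j : C (S j) (S j) = 1.
Proof.
  unfold C. rewrite Nat.sub_diag. simpl (Factorial.fact 0). simpl INR at 3.
  field. apply INR_fact_neq_0.
Qed.

Lemma C_sub j : C (S j) j = INR (S j).
Proof.
  unfold C. replace (S j - j)%nat with 1%nat by lia. simpl (Factorial.fact 1).
  change (Factorial.fact (S j)) with (S j * Factorial.fact j)%nat.
  rewrite mult_INR. simpl (INR 1). field. apply INR_fact_neq_0.
Qed.

Lemma D_pw j n : D (pw (S j)) n = sum_f_R0 (fun i => C (S j) i * pw i n) j.
Proof.
  unfold D, pw. rewrite S_INR. rewrite binomial.
  change (sum_f_R0 (fun i => C (S j) i * INR n ^ i * 1 ^ (S j - i)) (S j))
    with (sum_f_R0 (fun i => C (S j) i * INR n ^ i * 1 ^ (S j - i)) j +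
          C (S j) (S j) * INR n ^ (S j) * 1 ^ (S j - S j)).
  rewrite C_top, Nat.sub_diag. simpl (1 ^ 0).
  assert (E : sum_f_R0 (fun i => C (S j) i * INR n ^ i * 1 ^ (S j - i)) j =
              sum_f_R0 (fun i => C (S j) i * INR n ^ i) j).
  { apply sum_eq. intros i _. rewrite pow1. ring. }
  rewrite E. ring.
Qed.

Lemma sum_zero F K : (forall i, (i <= K)%nat -> F i = 0) -> sum_f_R0 F K = 0.
Proof.
  induction K; intro H; simpl. apply H; lia.
  rewrite IHK by (intros; apply H; lia). rewrite H by lia. ring.
Qed.

Lemma sum_top F K : (forall i, (i < K)%nat -> F i = 0) -> sum_f_R0 F K = F K.
Proof.
  destruct K; intro H; simpl. reflexivity.
  rewrite sum_zero by (intros; apply H; lia). ring.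
Qed.

Lemma Dn_pw_all j : (forall n, Dn j (pw j) n = INR (Factorial.fact j)) /\
  (forall m n, (j < m)%nat -> Dn m (pw j) n = 0).
Proof.
  induction j as [j IH] using lt_wf_ind.
  assert (Hf : forall n, Dn j (pw j) n = INR (Factorial.fact j)).
  { destruct j as [|j].
    - intro n. simpl. unfold pw. simpl. reflexivity.
    - intro n. simpl Dn.
      rewrite (Dn_ext j _ (fun k => sum_f_R0 (fun i => C (S j) i * pw i k) j))
        by (intro; apply D_pw).
      rewrite Dn_sum. rewrite sum_top.
      + rewrite Dn_scal. rewrite (proj1 (IH j ltac:(lia))). rewrite C_sub.
        change (Factorial.fact (S j)) with (S j * Factorial.fact j)%nat.
        rewrite mult_INR. ring.
      + intros i Hi. rewrite Dn_scal. rewrite (proj2 (IH i ltac:(lia))) by lia. ring. }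
  split. exact Hf.
  intros m n Hm.
  assert (H0 : forall n, Dn (S j) (pw j) n = 0) by (apply (Dn_const_next j _ _ Hf)).
  replace m with ((m - S j) + S j)%nat by lia. apply Dn_zero_up. exact H0.
Qed.

Lemma Dn_poly_top a d n : Dn d (fun k => poly_eval a d k) n = a d * INR (Factorial.fact d).
Proof.
  unfold poly_eval, poly_term.
  change (fun k => sum_f_R0 (fun i => a i * INR k ^ i) d)
    with (fun k => sum_f_R0 (fun i => (fun i k => a i * pw i k) i k) d).
  rewrite Dn_sum. rewrite sum_top.
  - rewrite Dn_scal. rewrite (proj1 (Dn_pw_all d)). reflexivity.
  - intros i Hi. rewrite Dn_scal. rewrite (proj2 (Dn_pw_all i)) by lia. ring.
Qed.

Lemma g_props a d q :
  let g := fun n => poly_eval a (S d) n - poly_eval a (S d) (n + q)%nat in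
  (forall n, Dn (S d) g n = 0) /\
  Dn d g 0%nat = - (INR q * (a (S d) * INR (Factorial.fact (S d)))).
Proof.
  intro g. split.
  - intro n. unfold g. rewrite Dn_sub.
    rewrite (Dn_shift (S d) (fun k => poly_eval a (S d) k)).
    rewrite Dn_poly_top.
    replace (Dn (S d) (poly_eval a (S d)) n) with (Dn (S d) (fun k => poly_eval a (S d) k) n) by reflexivity.
    rewrite Dn_poly_top. ring.
  - unfold g. rewrite Dn_sub.
    rewrite (Dn_shift d (fun k => poly_eval a (S d) k)). simpl (0 + q)%nat.
    rewrite <- (Dn_slope d (fun k => poly_eval a (S d) k) (a (S d) * INR (Factorial.fact (S d))) q).
    replace (Dn d (poly_eval a (S d)) 0%nat) with (Dn d (fun k => poly_eval a (S d) k) 0%nat) by reflexivity.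
    ring. intro n. apply Dn_poly_top.
Qed.

Fixpoint W (x Q k : nat) : nat :=
  match k with O => O | S k' => ((x + Q) * W x Q k' + x ^ k')%nat end.

Lemma W_eq x Q k : ((x + Q) ^ k = x ^ k + Q * W x Q k)%nat.
Proof. induction k; simpl. lia. rewrite IHk. ring. Qed.

Lemma W_le x Q k : (W x Q (S k) <= S k * (x + Q) ^ k)%nat.
Proof.
  induction k. simpl. lia.
  change (W x Q (S (S k))) with ((x + Q) * W x Q (S k) + x ^ (S k))%nat.
  assert (x ^ S k <= (x + Q) ^ S k)%nat by (apply Nat.pow_le_mono_l; lia).
  assert ((x + Q) * W x Q (S k) <= (x + Q) * (S k * (x + Q) ^ k))%nat
    by (apply Nat.mul_le_mono_l; exact IHk).
  change ((x + Q) ^ S k)%nat with ((x + Q) * (x + Q) ^ k)%nat in *. nia.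
Qed.

Lemma top_lemma a d eta r1 : 0 < eta -> exists eps, 0 < eps /\ exists R : nat,
  forall q, (1 <= q)%nat ->
  (forall n, (n <= R * q)%nat -> tdist (poly_eval a (S d) n) (poly_eval a (S d) (n + q)) < eps) ->
  forall n, (n <= r1 * (Factorial.fact (S d) * q))%nat ->
    tdist (poly_term a (S d) n) (poly_term a (S d) (n + Factorial.fact (S d) * q)) < eta.
Proof.
  intro Heta.
  set (M := Factorial.fact (S d)).
  set (K := 2 ^ d * INR (S d) * INR (S r1) ^ d).
  assert (HK : 0 < K).
  { unfold K. apply Rmult_lt_0_compat. apply Rmult_lt_0_compat.
    apply pow_lt; lra. apply lt_0_INR; lia. apply pow_lt, lt_0_INR; lia. }
  assert (H2d : 0 < 2 ^ d) by (apply pow_lt; lra).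
  exists (Rmin (1 / (4 * 2 ^ d)) (eta / (2 * K))). split.
  { apply Rmin_glb_lt; apply Rdiv_lt_0_compat; lra. }
  exists (d * M)%nat. intros q Hq Hgood n Hn.
  set (e0 := Rmin (1 / (4 * 2 ^ d)) (eta / (2 * K))).
  assert (He0 : 0 < e0) by (apply Rmin_glb_lt; apply Rdiv_lt_0_compat; lra).
  destruct (g_props a d q) as [HD HDd].
  set (g := fun n => poly_eval a (S d) n - poly_eval a (S d) (n + q)%nat) in *.
  destruct (top_extract d g (d * M * q + 1)%nat (M * q)%nat e0) as [z Hz].
  - exact He0.
  - assert (e0 <= 1 / (4 * 2 ^ d)) by apply Rmin_l.
    apply Rmult_le_compat_r with (r := 2 ^ d) in H; [|lra].
    replace (1 / (4 * 2 ^ d) * 2 ^ d) with (1/4) in H by (field; lra). exact H.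
  - intros k Hk. apply Hgood. lia.
  - exact HD.
  - lia.
  - set (Q := (M * q)%nat) in *.
    set (e := Dn d g 0%nat - IZR z) in *.
    unfold tdist, poly_term.
    assert (E : a (S d) * INR n ^ S d - a (S d) * INR (n + Q) ^ S d =
                e * INR (W n Q (S d)) + IZR z * INR (W n Q (S d))).
    { rewrite <- !pow_INR. rewrite W_eq. rewrite plus_INR, mult_INR.
      replace (e * INR (W n Q (S d)) + IZR z * INR (W n Q (S d)))
        with (Dn d g 0%nat * INR (W n Q (S d))) by (unfold e; ring).
      rewrite HDd. unfold Q. rewrite mult_INR. fold M. ring. }
    rewrite E. rewrite tnorm_isZ by (apply isZ_mul; [exists z; reflexivity | apply isZ_INR]).
    eapply Rle_lt_trans. apply tnorm_abs. rewrite Rabs_mult.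
    rewrite (Rabs_right (INR _)) by (apply Rle_ge, pos_INR).
    assert (HW : INR (W n Q (S d)) <= INR (S d) * (INR (S r1) ^ d * INR Q ^ d)).
    { eapply Rle_trans. apply le_INR, W_le. rewrite mult_INR, pow_INR.
      apply Rmult_le_compat_l. apply pos_INR.
      rewrite <- Rpow_mult_distr. apply pow_incr. split. apply pos_INR.
      rewrite <- mult_INR. apply le_INR. simpl. lia. }
    assert (He : 0 <= Rabs e) by apply Rabs_pos.
    apply Rle_lt_trans with (Rabs e * (INR (S d) * (INR (S r1) ^ d * INR Q ^ d))).
    { apply Rmult_le_compat_l; assumption. }
    replace (Rabs e * (INR (S d) * (INR (S r1) ^ d * INR Q ^ d)))
      with ((Rabs e * INR Q ^ d) * (INR (S d) * INR (S r1) ^ d)) by ring.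
    assert (Hpos : 0 < INR (S d) * INR (S r1) ^ d).
    { apply Rmult_lt_0_compat. apply lt_0_INR; lia. apply pow_lt, lt_0_INR; lia. }
    apply Rle_lt_trans with ((2 ^ d * e0) * (INR (S d) * INR (S r1) ^ d)).
    { apply Rmult_le_compat_r. lra. exact Hz. }
    assert (e0 <= eta / (2 * K)) by apply Rmin_r.
    replace (2 ^ d * e0 * (INR (S d) * INR (S r1) ^ d)) with (K * e0) by (unfold K; ring).
    apply Rle_lt_trans with (K * (eta / (2 * K))).
    apply Rmult_le_compat_l; lra.
    replace (K * (eta / (2 * K))) with (eta / 2) by (field; lra). lra.
Qed.

Definition good (w : nat -> R) (q : nat) (eta : R) (N : nat) :=
  forall n, (n <= N)%nat -> tdist (w n) (w (n + q)%nat) < eta.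

Lemma tdist_tri x y z : tdist x z <= tdist x y + tdist y z.
Proof.
  unfold tdist. replace (x - z) with ((x - y) + (y - z)) by ring. apply tnorm_add.
Qed.

Lemma mult_aux w q eta L : good w q eta L -> forall m n, (n + m * q <= L)%nat ->
  tdist (w n) (w (n + S m * q)%nat) < INR (S m) * eta.
Proof.
  intros H m. induction m; intros n Hn.
  - simpl. rewrite Nat.add_0_r, Rmult_1_l. apply H. lia.
  - eapply Rle_lt_trans. apply (tdist_tri _ (w (n + S m * q)%nat)).
    rewrite S_INR.
    assert (tdist (w n) (w (n + S m * q)%nat) < INR (S m) * eta) by (apply IHm; lia).
    assert (tdist (w (n + S m * q)%nat) (w (n + S m * q + q)%nat) < eta) by (apply H; lia).
    replace (n + S (S m) * q)%nat with (n + S m * q + q)%nat by lia. lra.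
Qed.

Lemma mult_lemma w q eta L : good w q eta L -> forall m n, (1 <= m)%nat ->
  (n + m * q <= L + q)%nat -> tdist (w n) (w (n + m * q)%nat) < INR m * eta.
Proof.
  intros H m n Hm Hn. destruct m as [|m]. lia. apply (mult_aux w q eta L H). lia.
Qed.

Lemma good_mono w q e1 e2 N1 N2 : good w q e1 N1 -> e1 <= e2 -> (N2 <= N1)%nat -> good w q e2 N2.
Proof. intros H He HN n Hn. eapply Rlt_le_trans. apply H. lia. exact He. Qed.

Lemma poly_eval_S a d n : poly_eval a (S d) n = poly_eval a d n + poly_term a (S d) n.
Proof. reflexivity. Qed.

Lemma tdist_self x : tdist x x = 0.
Proof. unfold tdist. rewrite Rminus_diag. apply (tnorm_IZR 0). Qed.

Lemma key d : forall a eps r, 0 < eps -> exists eps', 0 < eps' /\ exists R B : nat,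
  (1 <= B)%nat /\ forall q, (1 <= q)%nat -> good (fun n => poly_eval a d n) q eps' (R * q) ->
  exists m, (1 <= m <= B)%nat /\
    forall k, (k <= d)%nat -> good (poly_term a k) (m * q) eps (r * (m * q)).
Proof.
  induction d; intros a eps r Heps.
  - exists 1. split. lra. exists 0%nat, 1%nat. split. lia.
    intros q Hq _. exists 1%nat. split. lia.
    intros k Hk n Hn. replace k with 0%nat by lia. unfold poly_term. simpl.
    rewrite !Rmult_1_r. rewrite tdist_self. exact Heps.
  - destruct (IHd a eps r Heps) as [ed [Hed [Rd [Bd [HBd HIH]]]]].
    set (M := Factorial.fact (S d)).
    assert (HM : (1 <= M)%nat) by (apply Factorial.lt_O_fact).
    assert (HBdR : 0 < INR Bd) by (apply lt_0_INR; lia).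
    assert (HMR : 0 < INR M) by (apply lt_0_INR; lia).
    set (eta1 := Rmin (eps / (2 * INR Bd)) (ed / 2)).
    assert (Heta1 : 0 < eta1) by (apply Rmin_glb_lt; apply Rdiv_lt_0_compat; lra).
    set (r1 := (S r * Bd + Rd)%nat).
    destruct (top_lemma a d eta1 r1 Heta1) as [e2 [He2 [R2 HT]]].
    exists (Rmin e2 (ed / (2 * INR M))). split.
    { apply Rmin_glb_lt. exact He2. apply Rdiv_lt_0_compat; lra. }
    exists (R2 + Rd * M + M)%nat, (Bd * M)%nat. split. nia.
    intros q Hq Hgood.
    assert (HgT : good (poly_term a (S d)) (M * q) eta1 (r1 * (M * q))).
    { intros n Hn. apply (HT q Hq). 
      - intros k Hk. eapply Rlt_le_trans. apply Hgood. nia. apply Rmin_l.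
      - exact Hn. }
    assert (Hgd : good (fun n => poly_eval a d n) (M * q) ed (Rd * (M * q))).
    { intros n Hn.
      assert (A1 : tdist (poly_eval a (S d) n) (poly_eval a (S d) (n + M * q)%nat)
                   < INR M * Rmin e2 (ed / (2 * INR M))).
      { apply (mult_lemma _ q _ ((R2 + Rd * M + M) * q) Hgood). lia. nia. }
      assert (A2 : tdist (poly_term a (S d) n) (poly_term a (S d) (n + M * q)%nat) < eta1).
      { apply HgT. unfold r1. nia. }
      assert (B1 : INR M * Rmin e2 (ed / (2 * INR M)) <= ed / 2).
      { apply Rle_trans with (INR M * (ed / (2 * INR M))).
        apply Rmult_le_compat_l. lra. apply Rmin_r.
        right. field. lra. }
      assert (B2 : eta1 <= ed / 2) by apply Rmin_r.
      unfold tdist in *. rewrite !poly_eval_S in A1.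
      replace (poly_eval a d n - poly_eval a d (n + M * q)%nat) with
        ((poly_eval a d n + poly_term a (S d) n -
          (poly_eval a d (n + M * q)%nat + poly_term a (S d) (n + M * q)%nat))
         - (poly_term a (S d) n - poly_term a (S d) (n + M * q)%nat)) by ring.
      eapply Rle_lt_trans. apply tnorm_sub. lra. }
    destruct (HIH (M * q)%nat ltac:(nia) Hgd) as [m' [Hm' Hk]].
    exists (m' * M)%nat. split. nia.
    intros k Hkd. replace (m' * M * q)%nat with (m' * (M * q))%nat by ring.
    destruct (Nat.eq_dec k (S d)) as [->|Hne].
    + intros n Hn.
      eapply Rlt_le_trans. apply (mult_lemma _ (M * q) eta1 (r1 * (M * q)) HgT m' n).
      lia. unfold r1. nia.
      apply Rle_trans with (INR Bd * eta1).
      apply Rmult_le_compat_r. lra. apply le_INR. lia.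
      apply Rle_trans with (INR Bd * (eps / (2 * INR Bd))).
      apply Rmult_le_compat_l. lra. apply Rmin_l.
      replace (INR Bd * (eps / (2 * INR Bd))) with (eps / 2) by (field; lra). lra.
    + apply Hk. lia.
Qed.

Lemma cover d : forall m, (m <= S d)%nat -> exists S : list {k : nat | (k <= d)%nat},
  forall k, (k < m)%nat -> exists x, In x S /\ proj1_sig x = k.
Proof.
  induction m; intro Hm.
  - exists nil. intros; lia.
  - destruct (IHm ltac:(lia)) as [S HS].
    assert (Hmd : (m <= d)%nat) by lia.
    exists (exist _ m Hmd :: S). intros k Hk.
    destruct (Nat.eq_dec k m) as [->|Hne].
    + exists (exist _ m Hmd). split. left. reflexivity. reflexivity.
    + destruct (HS k ltac:(lia)) as [x [Hx1 Hx2]]. exists x. split. right. exact Hx1. exact Hx2.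
Qed.

Lemma sum_bound a eta n1 n2 : forall d, (forall k, (k <= d)%nat ->
  tdist (poly_term a k n1) (poly_term a k n2) < eta) ->
  tdist (poly_eval a d n1) (poly_eval a d n2) < INR (S d) * eta.
Proof.
  induction d; intro H.
  - simpl. rewrite Rmult_1_l. apply H. lia.
  - rewrite !poly_eval_S. rewrite S_INR.
    assert (A := IHd ltac:(intros; apply H; lia)).
    assert (B := H (S d) ltac:(lia)).
    unfold tdist in *.
    replace (poly_eval a d n1 + poly_term a (S d) n1 - (poly_eval a d n2 + poly_term a (S d) n2))
      with ((poly_eval a d n1 - poly_eval a d n2) + (poly_term a (S d) n1 - poly_term a (S d) n2))
      by ring.
    eapply Rle_lt_trans. apply tnorm_add. lra.
Qed.

Theorem theorem3p4 (d : nat) (a : nat -> R) :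
  repetition (fun n => poly_eval a d n) <->
  joint_repetition (fun (k : {k : nat | (k <= d)%nat}) (n : nat) => poly_term a (proj1_sig k) n).
Proof.
  split.
  - intro Hrep.
    assert (Jt : forall eps r, 0 < eps -> (1 <= r)%nat -> exists q, (1 <= q)%nat /\
      forall k, (k <= d)%nat -> forall n, (n <= r * q)%nat ->
        tdist (poly_term a k n) (poly_term a k (n + q)%nat) < eps).
    { intros eps r He Hr.
      destruct (key d a eps r He) as [e' [He' [R [B [HB HK]]]]].
      destruct (Hrep e' (S R) He' ltac:(lia)) as [q [Hq Hgood]].
      destruct (HK q Hq) as [m [Hm Hk]].
      { intros n Hn. apply Hgood. nia. }
      exists (m * q)%nat. split. nia. intros k Hkd n Hn. apply (Hk k Hkd n Hn). }
    split.
    + intros [k Hk] eps r He Hr. destruct (Jt eps r He Hr) as [q [Hq H]].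
      exists q. split. exact Hq. intros n Hn. apply (H k Hk n Hn).
    + intros Lst eps r He Hr. destruct (Jt eps r He Hr) as [q [Hq H]].
      exists q. split. exact Hq. intros [k Hk] _ n Hn. apply (H k Hk n Hn).
  - intros [_ HJ] eps r He Hr.
    destruct (cover d (S d) (le_n _)) as [Lst HS].
    assert (Hd : 0 < INR (S d)) by (apply lt_0_INR; lia).
    destruct (HJ Lst (eps / INR (S d)) r ltac:(apply Rdiv_lt_0_compat; lra) Hr) as [q [Hq H]].
    exists q. split. exact Hq. intros n Hn.
    replace eps with (INR (S d) * (eps / INR (S d))) by (field; lra).
    apply sum_bound. intros k Hk.
    destruct (HS k ltac:(lia)) as [x [Hx1 Hx2]].
    rewrite <- Hx2. apply (H x Hx1 n Hn).
Qed.
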